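(* Let $n\ge 2d$. A symmetric form $f$ of degree $2d$ in $n$ variables is a sum of squares of forms in $T$ if and only if $f=\langle Q_1,A\rangle+\langle Q_2,B\rangle$ for some positive semidefinite real matrices $Q_1$ (of size $\pi(d)\times\pi(d)$) and $Q_2$ (of size $N\times N$, $N=\sum_{a=1}^d\pi(d-a)$).
   Context: $p_i=\frac1n(x_1^i+\dots+x_n^i)$, $p_\mu=\prod_i p_{\mu_i}$ for a partition $\mu$ (with $p_\emptyset=1$ for the empty partition of $0$). $\pi(k)$ = number of partitions of $k$. $H_{n,d}$ is the space of forms of degree $d$ in $n$ variables and $H^S_{n,k}$ the symmetric ones; $\mathcal{S}_n$ acts by permuting variables. $T\subseteq H_{n,d}$ is the $\mathcal{S}_n$-submodule generated by $H^S_{n,d}$ together with all forms $(x_1^a-x_2^a)g$ with $a\in\{1,\dots,d\}$ and $g\in H^S_{n,d-a}$. Let $\lambda_1,\dots,\lambda_{\pi(d)}$ be the partitions of $d$ and for $a\in\{1,\dots,d\}$ let $\mu^a_1,\dots,\mu^a_{\pi(d-a)}$ be the partitions of $d-a$. $A$ is the $\pi(d)\times\pi(d)$ matrix with $A_{i,j}=p_{\lambda_i}p_{\lambda_j}$. $B$ is the block matrix with blocks $B_{a,b}$ ($a,b\in\{1,\dots,d\}$) of size $\pi(d-a)\times\pi(d-b)$ with entries $(B_{a,b})_{i,j}=p_{\mu^a_i}p_{\mu^b_j}(p_{a+b}-p_ap_b)$. For symmetric matrices, $\langle X,Y\rangle=\operatorname{trace}(XY)$. *)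

(* Defs.v *)
From HB Require Import structures.
From mathcomp Require Import all_boot all_order all_algebra all_fingroup.
From mathcomp Require Import reals.
From mathcomp Require Import mpoly.
Set Implicit Arguments. Unset Strict Implicit. Unset Printing Implicit Defensive.
Import Order.TTheory GRing.Theory Num.Theory.
Local Open Scope ring_scope.

Section Defs.
Variables (R : realType) (n : nat).

Definition form (d : nat) (f : {mpoly R[n]}) : Prop := f \is d.-homog.

Definition symform (d : nat) (f : {mpoly R[n]}) : Prop :=
  f \is d.-homog /\ f \is symmetric.

(* Generators of T, together with all their images under S_n:
   permuted symmetric forms of degree d, and permuted
   (x_1^a - x_2^a) g with 1 <= a <= d, g in H^S_{n,d-a}.
   x_1, x_2 are the variables of index 0 and 1. *)
Definition T_gen (d : nat) (p : {mpoly R[n]}) : Prop :=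
  (exists (s : 'S_n) (h : {mpoly R[n]}), symform d h /\ p = msym s h) \/
  (exists (s : 'S_n) (a : nat) (i j : 'I_n) (g : {mpoly R[n]}),
     [/\ (1 <= a <= d)%N, val i = 0%N, val j = 1%N, symform (d - a) g &
         p = msym s (('X_i ^+ a - 'X_j ^+ a) * g)]).

(* T: the S_n-submodule (R-linear subspace stable under permutation of the
   variables) generated by the above; i.e. the R-span of the S_n-orbits of
   the generators. *)
Definition inT (d : nat) (q : {mpoly R[n]}) : Prop :=
  exists s : seq (R * {mpoly R[n]}),
    (forall x, x \in s -> T_gen d x.2) /\ q = \sum_(x <- s) x.1 *: x.2.

Definition sos_T (d : nat) (f : {mpoly R[n]}) : Prop :=
  exists qs : seq {mpoly R[n]},
    (forall q, q \in qs -> inT d q) /\ f = \sum_(q <- qs) q ^+ 2.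

Definition psum (i : nat) : {mpoly R[n]} :=
  (n%:R)^-1 *: \sum_(j < n) 'X_j ^+ i.

End Defs.

(* Partitions of k, encoded by multiplicity vectors: m i is the number of
   parts equal to i+1. *)
Definition partT (k : nat) :=
  {m : {ffun 'I_k -> 'I_k.+1} | (\sum_(i < k) i.+1 * m i)%N == k}.

Definition npart (k : nat) : nat := #|{: partT k}|.

Definition pmu (R : realType) (n k : nat) (mu : partT k) : {mpoly R[n]} :=
  \prod_(i < k) psum R n i.+1 ^+ (val mu i).

Definition lam (k : nat) (i : 'I_(npart k)) : partT k := enum_val i.

Definition matA (R : realType) (n d : nat) : 'M[{mpoly R[n]}]_(npart d) :=
  \matrix_(i, j) (pmu R n (lam i) * pmu R n (lam j)).

(* Index set of B: pairs (a, mu) with a in {1..d} (stored as a' = a-1 : 'I_d)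
   and mu a partition of d - a.  Its cardinality is N = sum_a pi(d-a). *)
Definition BIdx (d : nat) := {a : 'I_d & partT (d - a.+1)}.

Definition Nsize (d : nat) : nat := #|{: BIdx d}|.

Definition matB (R : realType) (n d : nat) : 'M[{mpoly R[n]}]_(Nsize d) :=
  \matrix_(i, j)
    let x := (enum_val i : BIdx d) in let y := (enum_val j : BIdx d) in
    let a := (tag x).+1 in let b := (tag y).+1 in
    pmu R n (tagged x) * pmu R n (tagged y) *
    (psum R n (a + b) - psum R n a * psum R n b).

Definition psd (R : realType) (m : nat) (Q : 'M[R]_m) : Prop :=
  Q^T = Q /\ forall v : 'cV[R]_m, 0 <= (v^T *m Q *m v) 0 0.

Definition mxinner (R : realType) (n m : nat) (Q : 'M[R]_m)
  (M : 'M[{mpoly R[n]}]_m) : {mpoly R[n]} :=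
  \tr (map_mx (fun c : R => c%:MP_[n]) Q *m M).

(* Main.v *)
Require Import Defs.
From HB Require Import structures.
From mathcomp Require Import all_boot all_order all_algebra all_fingroup.
From mathcomp Require Import reals.
From mathcomp Require Import mpoly.
From mathcomp Require Import ring lra zify.
Import Order.TTheory GRing.Theory Num.Theory.
Local Open Scope ring_scope.
Set Implicit Arguments. Unset Strict Implicit. Unset Printing Implicit Defensive.

Section Newton.
Variables (R : realType) (n : nat).
Local Notation P := {mpoly R[n]}.

Definition Xs (h : {set 'I_n}) : P := \prod_(l in h) 'X_l.
Definition Es (m : nat) : P := \sum_(h : {set 'I_n} | #|h| == m) Xs h.
Definition Pw (i : nat) : P := \sum_(j < n) 'X_j ^+ i.

Lemma mesym_Es m : mesym n R m = Es m.
Proof.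
rewrite mesymE /Es; apply: eq_bigr => h _.
rewrite mpolyXE_id /Xs [RHS]big_mkcond /=; apply: eq_bigr => i _.
by rewrite mnmE; case: (i \in h); rewrite ?expr1 ?expr0.
Qed.

Lemma bij_sets (M : nmodType) m (F : {set 'I_n} -> 'I_n -> M) :
  \sum_(h : {set 'I_n} | #|h| == m.+1) \sum_(j in h) F h j =
  \sum_(h : {set 'I_n} | #|h| == m) \sum_(j | j \notin h) F (j |: h) j.
Proof.
rewrite (exchange_big_dep xpredT) //= [RHS](exchange_big_dep xpredT) //=.
apply: eq_bigr => j _.
rewrite (reindex_onto (fun g => j |: g) (fun g => g :\ j)) /=; last first.
  by move=> g /andP[_ jg]; rewrite setD1K.
apply: eq_bigl => g.
case jg: (j \in g).
  rewrite andbF; apply/negbTE; apply/negP => /andP[_ /eqP E].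
  by move: jg; rewrite -E setD11.
by rewrite setU1K ?jg // eqxx andbT setU11 andbT cardsU1 jg add1n eqSS /= andbT.
Qed.


Lemma Xs_U1 (j : 'I_n) (h : {set 'I_n}) : j \notin h -> Xs (j |: h) = 'X_j * Xs h.
Proof. by move=> jh; rewrite /Xs big_setU1. Qed.

Lemma tele (a : nat -> P) k :
  \sum_(i < k) (-1) ^+ i * (a i + a i.+1) = a 0%N - (-1) ^+ k * a k.
Proof.
elim: k => [|k IH]; first by rewrite big_ord0 expr0 mul1r subrr.
rewrite big_ord_recr /= IH exprS mulrDr !mulN1r; ring.
Qed.

Section NewtonK.
Variable k : nat.
Definition NA i : P :=
  \sum_(h : {set 'I_n} | #|h| == (k - i.+1)%N) \sum_(j | j \notin h) 'X_j ^+ i.+1 * Xs h.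
Definition NB i : P :=
  \sum_(h : {set 'I_n} | #|h| == (k - i.+1)%N) \sum_(j in h) 'X_j ^+ i.+1 * Xs h.
Definition Na i := if (i < k)%N then NA i else 0.

Lemma EP_AB i : Es (k - i.+1) * Pw i.+1 = NA i + NB i.
Proof.
rewrite /Es mulr_suml /NA /NB -big_split /=; apply: eq_bigr => h _.
rewrite /Pw mulr_sumr (bigID (fun j => j \in h)) /= addrC.
by congr (_ + _); apply: eq_bigr => j _; rewrite mulrC.
Qed.

Lemma NB_eq i : (i < k)%N -> NB i = Na i.+1.
Proof.
move=> ik; rewrite /Na /NB; case: ltnP => ik1.
  have -> : (k - i.+1 = (k - i.+2).+1)%N by rewrite subnSK.
  rewrite bij_sets /NA; apply: eq_bigr => h _; apply: eq_bigr => j jh.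
  by rewrite Xs_U1 // mulrA -exprSr.
have -> : (k - i.+1 = 0)%N by apply/eqP; rewrite subn_eq0.
rewrite big1 // => h /eqP/cards0_eq ->; rewrite big1 // => j; by rewrite inE.
Qed.

Lemma NA0 : (0 < k)%N -> NA 0 = k%:R * Es k.
Proof.
move=> k0; rewrite /NA subn1.
have H : forall m, \sum_(h : {set 'I_n} | #|h| == m.+1) \sum_(j in h) Xs h =
  \sum_(h : {set 'I_n} | #|h| == m) \sum_(j | j \notin h) Xs (j |: h) :=
  fun m => bij_sets m (fun g _ => Xs g).
transitivity (\sum_(h : {set 'I_n} | #|h| == k.-1) \sum_(j | j \notin h) Xs (j |: h)).
  apply: eq_bigr => h _; apply: eq_bigr => j jh; by rewrite Xs_U1 // expr1.
rewrite -H prednK // /Es mulr_sumr; apply: eq_bigr => h /eqP hk.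
by rewrite sumr_const hk mulr_natl.
Qed.

Lemma newton_id : (0 < k)%N ->
  k%:R * Es k = \sum_(i < k) (-1) ^+ i * (Es (k - i.+1) * Pw i.+1).
Proof.
move=> k0.
rewrite (eq_bigr (fun i : 'I_k => (-1) ^+ i * (Na i + Na i.+1))); last first.
  move=> i _; rewrite EP_AB NB_eq // /Na ltn_ord //.
rewrite tele /Na ltnn mulr0 subr0 k0 NA0 //.
Qed.

End NewtonK.

Definition prodps (s : seq nat) : P := \prod_(j <- s) psum R n j.
Definition PS (k : nat) (g : P) : Prop := exists l : seq (R * seq nat),
  (forall x, x \in l -> all (fun j => 0 < j)%N x.2 && (sumn x.2 == k)) /\
  g = \sum_(x <- l) x.1 *: prodps x.2.

Lemma PS0 k : PS k 0.
Proof. by exists [::]; split => //; rewrite big_nil. Qed.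

Lemma PS1 : PS 0 1.
Proof.
exists [:: (1, [::])]; split; first by move=> x; rewrite inE => /eqP ->.
by rewrite big_seq1 scale1r /prodps big_nil.
Qed.

Lemma PSp j : (0 < j)%N -> PS j (psum R n j).
Proof.
move=> j0; exists [:: (1, [:: j])]; split.
  by move=> x; rewrite inE => /eqP -> /=; rewrite j0 addn0 eqxx.
by rewrite big_seq1 scale1r /prodps big_seq1.
Qed.

Lemma PScast a b g : a = b -> PS a g -> PS b g.
Proof. by move=> ->. Qed.

Lemma PSD k g h : PS k g -> PS k h -> PS k (g + h).
Proof.
move=> [l1 [H1 ->]] [l2 [H2 ->]]; exists (l1 ++ l2); split; last by rewrite big_cat.
by move=> x; rewrite mem_cat => /orP[/H1|/H2].
Qed.

Lemma PSZ k c g : PS k g -> PS k (c *: g).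
Proof.
move=> [l [H ->]]; exists (map (fun x => (c * x.1, x.2)) l); split.
  by move=> x /mapP[y /H Hy ->].
by rewrite big_map scaler_sumr; apply: eq_bigr => x _; rewrite scalerA.
Qed.

Lemma PSM a b g h : PS a g -> PS b h -> PS (a + b) (g * h).
Proof.
move=> [l1 [H1 ->]] [l2 [H2 ->]].
exists [seq (x.1 * y.1, x.2 ++ y.2) | x <- l1, y <- l2]; split.
  move=> z /allpairsP[[x y] /= [/H1 /andP[Hx1 /eqP Hx2] /H2 /andP[Hy1 /eqP Hy2] ->]] /=.
  by rewrite all_cat Hx1 Hy1 sumn_cat Hx2 Hy2 eqxx.
rewrite big_allpairs_dep mulr_suml; apply: eq_bigr => x _.
rewrite mulr_sumr; apply: eq_bigr => y _.
by rewrite /prodps big_cat /= -scalerAl -scalerAr scalerA.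
Qed.

Lemma PSsum k (I : Type) (r : seq I) (Q : pred I) (F : I -> P) :
  (forall i, Q i -> PS k (F i)) -> PS k (\sum_(i <- r | Q i) F i).
Proof. by move=> H; apply: big_ind => //; [apply: PS0 | apply: PSD]. Qed.

Lemma PSX a g e : PS a g -> PS (a * e) (g ^+ e).
Proof.
move=> Hg; elim: e => [|e IH]; first by rewrite muln0 expr0; apply: PS1.
by rewrite exprS; apply: (PScast (esym (mulnS a e))); apply: PSM.
Qed.

Lemma PSprod (I : Type) (r : seq I) (w : I -> nat) (F : I -> P) :
  (forall i, PS (w i) (F i)) -> PS (\sum_(i <- r) w i) (\prod_(i <- r) F i).
Proof.
move=> H; elim: r => [|x r IH]; first by rewrite !big_nil; apply: PS1.
by rewrite !big_cons; apply: PSM.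
Qed.

Lemma PSsign k i g : PS k g -> PS k ((-1) ^+ i * g).
Proof.
by move=> H; rewrite -signr_odd; case: (odd i); rewrite ?expr0 ?mul1r // expr1 mulN1r -scaleN1r; apply: PSZ.
Qed.

Lemma Es0 : Es 0 = 1.
Proof.
rewrite /Es (eq_bigl (fun h => h == set0)); last by move=> h; rewrite cards_eq0.
by rewrite big_pred1_eq /Xs big_set0.
Qed.

Lemma Pw_psum j : (0 < n)%N -> Pw j = (n%:R : R) *: psum R n j.
Proof.
move=> n0; rewrite /psum scalerA mulfV ?scale1r //.
by rewrite pnatr_eq0 -lt0n.
Qed.

Lemma Es_PS : (0 < n)%N -> forall k, PS k (Es k).
Proof.
move=> n0 k; elim/ltn_ind: k => k IH.
case: k IH => [|k] IH; first by rewrite Es0; apply: PS1.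
have kk : ((k.+1)%:R : R) != 0 by rewrite pnatr_eq0.
have -> : Es k.+1 = ((k.+1)%:R : R)^-1 *: ((k.+1)%:R * Es k.+1).
  by rewrite mulr_natl -scaler_nat scalerA mulVf ?scale1r.
apply: PSZ; rewrite newton_id //; apply: PSsum => i _.
rewrite Pw_psum // -scalerAr; apply: PSsign; apply: PSZ.
have ik : (i < k.+1)%N := ltn_ord i.
apply: (PScast (subnK ik)); apply: PSM; first by apply: IH; rewrite ltn_subrL.
exact: PSp.
Qed.


Lemma sym_PS k (g : P) : g \is symmetric -> g \is k.-homog -> PS k g.
Proof.
move=> gs gh; have [t [<- th]] := sym_fundamental_homog gs gh.
rewrite comp_mpolyEX big_seq; apply: PSsum => m mt; apply: PSZ.
move/dhomogP: th => th; have wm := th m mt.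
rewrite comp_mpolyX -wm /mnmwgt /=.
apply: PSprod => i; rewrite tnth_mktuple mesym_Es.
apply: (PScast (mulnC _ _)); apply: PSX; apply: Es_PS.
exact: (leq_ltn_trans (leq0n i)).
Qed.


Lemma sum_ind k x : (0 < x <= k)%N -> (\sum_(i < k) i.+1 * (x == i.+1))%N = x.
Proof.
case: x => // x /= xk; rewrite (bigD1 (Ordinal xk)) //= eqxx muln1 big1 ?addn0 //.
move=> i ne; case: eqP => [[E]|_]; last by rewrite muln0.
by move: ne; rewrite (_ : i = Ordinal xk) ?eqxx //; apply: val_inj; rewrite /= E.
Qed.

Lemma prod_ind k x (F : nat -> P) : (0 < x <= k)%N ->
  \prod_(i < k) F i.+1 ^+ (x == i.+1) = F x.
Proof.
case: x => // x /= xk; rewrite (bigD1 (Ordinal xk)) //= eqxx expr1 big1 ?mulr1 //.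
move=> i ne; case: eqP => [[E]|_]; last by rewrite expr0.
by move: ne; rewrite (_ : i = Ordinal xk) ?eqxx //; apply: val_inj; rewrite /= E.
Qed.

Lemma L1 k s : all (fun j => 0 < j <= k)%N s ->
  (\sum_(i < k) i.+1 * count_mem i.+1 s)%N = sumn s.
Proof.
elim: s => [|x s IH] /=; first by rewrite big1 // => i _; rewrite muln0.
case/andP=> hx hs.
transitivity (\sum_(i < k) i.+1 * (x == i.+1) + \sum_(i < k) i.+1 * count_mem i.+1 s)%N.
  by rewrite -big_split; apply: eq_bigr => i _; rewrite mulnDr.
by rewrite sum_ind // IH.
Qed.

Lemma L2 k s (F : nat -> P) : all (fun j => 0 < j <= k)%N s ->
  \prod_(i < k) F i.+1 ^+ count_mem i.+1 s = \prod_(j <- s) F j.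
Proof.
elim: s => [|x s IH] /=; first by rewrite big_nil big1 // => i _; rewrite expr0.
case/andP=> hx hs; rewrite big_cons.
transitivity (\prod_(i < k) F i.+1 ^+ (x == i.+1) * \prod_(i < k) F i.+1 ^+ count_mem i.+1 s).
  by rewrite -big_split; apply: eq_bigr => i _; rewrite exprD.
by rewrite prod_ind // IH.
Qed.

Lemma size_sumn s : all (fun j => 0 < j)%N s -> (size s <= sumn s)%N.
Proof.
elim: s => //= x s IH /andP[x0 /IH]; rewrite -add1n; exact: leq_add.
Qed.

Lemma mem_sumn s x : x \in s -> (x <= sumn s)%N.
Proof.
elim: s => //= y s IH; rewrite inE => /orP[/eqP ->|/IH]; first exact: leq_addr.
move=> h; exact: (leq_trans h (leq_addl _ _)).
Qed.

Lemma mkpart_ex k s : all (fun j => 0 < j)%N s -> sumn s = k ->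
  exists mu : partT k, pmu R n mu = prodps s.
Proof.
move=> sp sk.
have hs : all (fun j => 0 < j <= k)%N s.
  apply/allP => x xs; rewrite (allP sp x xs) /= -sk; exact: mem_sumn.
have cb : forall i : 'I_k, (count_mem i.+1 s < k.+1)%N.
  move=> i; rewrite ltnS; apply: (leq_trans (count_size _ _)).
  by apply: (leq_trans (size_sumn sp)); rewrite sk.
have P1 : (\sum_(i < k) i.+1 * [ffun i : 'I_k => (inord (count_mem i.+1 s) : 'I_k.+1)] i)%N == k.
  apply/eqP; rewrite -[RHS]sk -(L1 hs); apply: eq_bigr => i _.
  by rewrite ffunE inordK.
exists (@exist _ (fun m : {ffun 'I_k -> 'I_k.+1} => (\sum_(i < k) i.+1 * m i)%N == k) _ P1); rewrite /pmu /= /prodps -(L2 _ hs); apply: eq_bigr => i _.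
by rewrite ffunE inordK.
Qed.

Definition SP k (g : P) := exists c : partT k -> R, g = \sum_mu c mu *: pmu R n mu.

Lemma PS_SP k g : PS k g -> SP k g.
Proof.
move=> [l [H ->]]; elim: l H => [|x l IH] H.
  by exists (fun _ => 0); rewrite big_nil big1 // => mu _; rewrite scale0r.
rewrite big_cons; have [c ->] : SP k (\sum_(x <- l) x.1 *: prodps x.2).
  by apply: IH => y yl; apply: H; rewrite inE yl orbT.
have /andP[x1 /eqP x2] := H x (mem_head _ _).
have [mu0 hmu] := mkpart_ex x1 x2.
exists (fun mu => c mu + x.1 * (mu == mu0)%:R); rewrite addrC.
rewrite [RHS](eq_bigr (fun mu => c mu *: pmu R n mu + x.1 * (mu == mu0)%:R *: pmu R n mu)); last first.
  by move=> mu _; rewrite scalerDl.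
rewrite big_split /=; congr (_ + _); rewrite (bigD1 mu0) //= eqxx mulr1 hmu big1 ?addr0 //.
by move=> mu /negbTE ->; rewrite mulr0 scale0r.
Qed.

Lemma sym_SP k (g : P) : g \is symmetric -> g \is k.-homog -> SP k g.
Proof. by move=> *; apply: PS_SP; apply: sym_PS. Qed.
End Newton.

Section LinAlg.
Variables (R : realType) (m : nat).
Implicit Types (Q : 'M[R]_m) (u v w : 'I_m -> R).

Definition bf Q u v := \sum_i \sum_j u i * Q i j * v j.
Definition vsub u v := fun k => u k - v k.
Definition vscl (t : R) u := fun k => t * u k.
Definition ev (i : 'I_m) := fun k : 'I_m => ((k == i)%:R : R).

Lemma bfBl Q u v w : bf Q (vsub u v) w = bf Q u w - bf Q v w.
Proof.
rewrite /bf -sumrB; apply: eq_bigr => i _; rewrite -sumrB; apply: eq_bigr => j _.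
by rewrite /vsub !mulrBl.
Qed.
Lemma bfBr Q u v w : bf Q w (vsub u v) = bf Q w u - bf Q w v.
Proof.
rewrite /bf -sumrB; apply: eq_bigr => i _; rewrite -sumrB; apply: eq_bigr => j _.
by rewrite /vsub !mulrBr.
Qed.
Lemma bfZl Q t u w : bf Q (vscl t u) w = t * bf Q u w.
Proof.
rewrite /bf mulr_sumr; apply: eq_bigr => i _; rewrite mulr_sumr; apply: eq_bigr => j _.
by rewrite /vscl !mulrA.
Qed.
Lemma bfZr Q t u w : bf Q w (vscl t u) = t * bf Q w u.
Proof.
rewrite /bf mulr_sumr; apply: eq_bigr => i _; rewrite mulr_sumr; apply: eq_bigr => j _.
rewrite /vscl; ring.
Qed.
Lemma bf_el Q i w : bf Q (ev i) w = \sum_j Q i j * w j.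
Proof.
rewrite /bf (bigD1 i) //= [X in _ + X]big1 ?addr0; last first.
  by move=> k ki; apply: big1 => j _; rewrite /ev (negbTE ki) !mul0r.
by apply: eq_bigr => j _; rewrite /ev eqxx mul1r.
Qed.
Lemma bf_er Q i w : bf Q w (ev i) = \sum_j w j * Q j i.
Proof.
rewrite /bf; apply: eq_bigr => j _; rewrite (bigD1 i) //= [X in _ + X]big1 ?addr0; last first.
  by move=> k ki; rewrite /ev (negbTE ki) mulr0.
by rewrite /ev eqxx mulr1.
Qed.
Lemma sum_ev (F : 'I_m -> R) i : \sum_j F j * ev i j = F i.
Proof.
rewrite (bigD1 i) //= [X in _ + X]big1 ?addr0; last by move=> k ki; rewrite /ev (negbTE ki) mulr0.
by rewrite /ev eqxx mulr1.
Qed.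

Lemma bf_ext Q u v u' v' : (forall k, u k = u' k) -> (forall k, v k = v' k) ->
  bf Q u v = bf Q u' v'.
Proof.
by move=> Hu Hv; apply: eq_bigr => i _; apply: eq_bigr => j _; rewrite Hu Hv.
Qed.

Lemma qformE Q (v : 'cV[R]_m) : (v^T *m Q *m v) 0 0 = bf Q (fun i => v i 0) (fun i => v i 0).
Proof.
rewrite /bf !mxE; rewrite [LHS](eq_bigr (fun j => \sum_i v i 0 * Q i j * v j 0)).
  by rewrite exchange_big.
by move=> j _; rewrite !mxE mulr_suml; apply: eq_bigr => i _; rewrite !mxE.
Qed.

Lemma psdP Q : psd Q -> forall u, 0 <= bf Q u u.
Proof.
move=> [_ H] u; have := H (\col_i u i); rewrite qformE.
by rewrite (bf_ext Q (u' := u) (v' := u)) // => k; rewrite mxE.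
Qed.


Lemma psd_of Q : Q^T = Q -> (forall u, 0 <= bf Q u u) -> psd Q.
Proof. by move=> HT H; split => // v; rewrite qformE. Qed.

Lemma psd_sym Q : psd Q -> forall i j, Q i j = Q j i.
Proof. by move=> [HT _] i j; rewrite -{1}HT mxE. Qed.

Lemma bf_ee Q i j : bf Q (ev i) (ev j) = Q i j.
Proof. by rewrite bf_el (eq_bigr (fun k => Q i k * ev j k)) // sum_ev. Qed.

Lemma psd_decomp_k k : forall Q, psd Q -> (forall i j : 'I_m, (k <= i)%N -> Q i j = 0) ->
  exists l : seq ('I_m -> R), forall i j, Q i j = \sum_(v <- l) v i * v j.
Proof.
elim: k => [|k IH] Q pQ HQ.
  by exists [::] => i j; rewrite big_nil; apply: HQ.
case: (ltnP k m) => km; last first.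
  apply: IH => // i j ki; have := ltn_ord i; rewrite ltnNge.
  by rewrite (leq_trans km ki).
pose i0 := Ordinal km; pose a := Q i0 i0.
have sQ := psd_sym pQ.
have a0 : 0 <= a by have := psdP pQ (ev i0); rewrite bf_ee.
have HQ' : forall i j : 'I_m, (k < i)%N -> Q i j = 0 by move=> i j; apply: HQ.
case: (eqVneq a 0) => [a_eq0|a_ne0].
  have row0 : forall j, Q i0 j = 0.
    move=> j; apply/eqP/negP => /negP qn.
    pose t := - (Q j j + 1) / (2 * Q i0 j).
    have := psdP pQ (vsub (vscl t (ev i0)) (vscl (-1) (ev j))).
    rewrite !(bfBl, bfBr, bfZl, bfZr, bf_ee) (sQ j i0) -/a a_eq0.
    have -> : t * (t * 0) - t * (-1 * Q i0 j) - (-1 * (t * Q i0 j) - -1 * (-1 * Q j j)) = -1.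
      rewrite /t; field; exact: qn.
    by move=> H; have := le_lt_trans H (@ltrN10 R); rewrite ltxx.
  apply: IH => // i j; rewrite leq_eqVlt => /orP[/eqP ki|]; last exact: HQ'.
  have -> : i = i0 by apply: val_inj.
  exact: row0.
have a_gt0 : 0 < a by rewrite lt_def a_ne0 a0.
pose Q' := \matrix_(i, j) (Q i j - Q i0 i * Q i0 j / a).
have pQ' : psd Q'.
  apply: psd_of.
    by apply/matrixP => i j; rewrite !mxE sQ; congr (_ - _); rewrite [Q i0 j * _]mulrC.
  move=> u; pose S := \sum_j Q i0 j * u j; pose t := S / a.
  have := psdP pQ (vsub u (vscl t (ev i0))).
  rewrite !(bfBl, bfBr, bfZl, bfZr, bf_ee) bf_el bf_er -/S -/a.
  rewrite (eq_bigr (fun j => Q i0 j * u j)); last by move=> j _; rewrite sQ mulrC.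
  rewrite -/S.
  have -> : bf Q u u - t * S - (t * S - t * (t * a)) = bf Q u u - S * S / a.
    rewrite /t; field; exact: a_ne0.
  have -> : bf Q' u u = bf Q u u - S * S / a; last by [].
  rewrite /bf /S mulr_suml mulr_suml -sumrB; apply: eq_bigr => i _.
  rewrite mulr_sumr mulr_suml -sumrB; apply: eq_bigr => j _; rewrite mxE.
  field; exact: a_ne0.
have [l Hl] : exists l : seq ('I_m -> R), forall i j, Q' i j = \sum_(v <- l) v i * v j.
  apply: IH => // i j; rewrite leq_eqVlt => /orP[/eqP ki|ki]; rewrite mxE.
    have -> : i = i0 by apply: val_inj.
    rewrite -/a; field; exact: a_ne0.
  by rewrite (HQ' i j ki) sQ (HQ' i i0 ki) !mul0r subr0.
exists ((fun i => Q i0 i / Num.sqrt a) :: l) => i j.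
rewrite big_cons -Hl mxE.
have sa : Num.sqrt a ^+ 2 = a by rewrite sqr_sqrtr.
have sa0 : Num.sqrt a != 0 by rewrite sqrtr_eq0 -ltNge.
have E : Q i0 i * Q i0 j / a = Q i0 i / Num.sqrt a * (Q i0 j / Num.sqrt a).
  by rewrite mulrACA -invfM -expr2 sa.
by rewrite E addrC subrK.
Qed.

Lemma psd_decomp Q : psd Q ->
  exists l : seq ('I_m -> R), forall i j, Q i j = \sum_(v <- l) v i * v j.
Proof.
move=> pQ; apply: (@psd_decomp_k m) => // i j mi.
by have := ltn_ord i; rewrite ltnNge mi.
Qed.
End LinAlg.

Section Av.
Variables (R : realType) (n : nat).
Local Notation P := {mpoly R[n]}.
Local Notation ps := (psum R n).

Definition Av (p : P) : P := ((#|{: 'S_n}|)%:R : R)^-1 *: \sum_(s : 'S_n) msym s p.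

Lemma AvD p q : Av (p + q) = Av p + Av q.
Proof. by rewrite /Av -scalerDr -big_split; congr (_ *: _); apply: eq_bigr => s _; rewrite msymD. Qed.

Lemma AvZ c p : Av (c *: p) = c *: Av p.
Proof.
rewrite /Av [RHS]scalerA mulrC -scalerA; congr (_ *: _); rewrite scaler_sumr.
by apply: eq_bigr => s _; rewrite msymZ.
Qed.

Lemma Av0 : Av 0 = 0.
Proof. by rewrite /Av big1 ?scaler0 // => s _; rewrite msym0. Qed.

Lemma Av_sum (I : Type) (r : seq I) (Q : pred I) (F : I -> P) :
  Av (\sum_(i <- r | Q i) F i) = \sum_(i <- r | Q i) Av (F i).
Proof.
elim/big_rec2: _ => [|i y1 y2 _ <-]; first exact: Av0.
by rewrite AvD.
Qed.

Lemma cardS_neq0 : ((#|{: 'S_n}|)%:R : R) != 0.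
Proof. by rewrite pnatr_eq0 -lt0n; apply/card_gt0P; exists 1%g. Qed.

Lemma Av_sym p : p \is symmetric -> Av p = p.
Proof.
move/issymP => H; rewrite /Av (eq_bigr (fun _ => p)) ?sumr_const; last by move=> s _; rewrite H.
by rewrite -scaler_nat scalerA mulVf ?scale1r // cardS_neq0.
Qed.

Lemma Av_symM p q : p \is symmetric -> Av (p * q) = p * Av q.
Proof.
move/issymP => H; rewrite /Av -scalerAr mulr_sumr; congr (_ *: _).
by apply: eq_bigr => s _; rewrite msymM H.
Qed.

Lemma Av_msym t p : Av (msym t p) = Av p.
Proof.
rewrite /Av; congr (_ *: _).
rewrite [RHS](reindex_inj (mulgI t)); apply: eq_bigr => s _.
by rewrite msymMm.
Qed.

Lemma msymXi (s : 'S_n) i : msym s ('X_i : P) = 'X_(s i).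
Proof. by rewrite /msym mmapX mmap1U. Qed.

Lemma psum_sym j : ps j \is symmetric.
Proof.
apply/issymP => s; rewrite /psum msymZ; congr (_ *: _); rewrite (raddf_sum (msym s)).
rewrite [RHS](reindex_inj (@perm_inj _ s)) /=; apply: eq_bigr => i _.
by rewrite rmorphXn /= msymXi.
Qed.

Lemma homog_Xi i : ('X_i : P) \is 1.-homog.
Proof. by rewrite dhomogX /= mdeg1. Qed.

Lemma homog_prod_seq (I : Type) (r : seq I) (w : I -> nat) (F : I -> P) :
  (forall i, F i \is (w i).-homog) -> \prod_(i <- r) F i \is (\sum_(i <- r) w i)%N.-homog.
Proof.
move=> H; elim: r => [|x r IH]; first by rewrite !big_nil dhomog1.
by rewrite !big_cons; apply: dhomogM.
Qed.

Lemma psum_homog j : ps j \is j.-homog.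
Proof.
apply: dhomogZ; apply: rpred_sum => i _.
by have := dhomogMn j (homog_Xi i); rewrite mul1n.
Qed.

Lemma pmu_sym k (mu : partT k) : pmu R n mu \is symmetric.
Proof. by apply: rpred_prod => i _; apply: rpredX; apply: psum_sym. Qed.

Lemma pmu_homog k (mu : partT k) : pmu R n mu \is k.-homog.
Proof.
rewrite -[X in _ \is X.-homog](eqP (valP mu)).
apply: homog_prod_seq => i; apply: dhomogMn; exact: psum_homog.
Qed.

Lemma Av_X_eq c k l : Av ('X_k ^+ c) = Av ('X_l ^+ c).
Proof.
have -> : ('X_k ^+ c : P) = msym (tperm l k) ('X_l ^+ c).
  by rewrite rmorphXn /= msymXi tpermL.
exact: Av_msym.
Qed.

Lemma sumX_psum c : (0 < n)%N -> \sum_(l < n) ('X_l ^+ c : P) = (n%:R : R) *: ps c.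
Proof. by move=> n0; rewrite -Pw_psum. Qed.

Lemma Av_Xk c k : Av ('X_k ^+ c) = ps c.
Proof.
have n0 : (0 < n)%N by apply: (leq_ltn_trans (leq0n k)).
have nn : (n%:R : R) != 0 by rewrite pnatr_eq0 -lt0n.
apply: (scalerI nn).
have -> : (n%:R : R) *: Av ('X_k ^+ c) = \sum_(l < n) Av ('X_l ^+ c).
  by rewrite (eq_bigr (fun _ => Av ('X_k ^+ c))) ?sumr_const ?card_ord ?scaler_nat // => l _; rewrite (Av_X_eq c l k).
rewrite -Av_sum sumX_psum // Av_sym //; apply: rpredZ; exact: psum_sym.
Qed.


Lemma perm2 (k' l' k l : 'I_n) : k' != l' -> k != l ->
  exists s : 'S_n, s k' = k /\ s l' = l.
Proof.
move=> ne' ne; pose j1 := tperm k' k l'.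
exists (tperm k' k * tperm j1 l)%g; rewrite !permM tpermL; split; last by rewrite tpermL.
apply: tpermD; last by rewrite eq_sym.
apply/eqP => E.
have : tperm k' k l' = tperm k' k k' by rewrite tpermL -/j1 E.
by move/perm_inj => E'; move: ne'; rewrite E' eqxx.
Qed.

Lemma Av_pair a b (k l k' l' : 'I_n) : k != l -> k' != l' ->
  Av ('X_k ^+ a * 'X_l ^+ b) = Av ('X_k' ^+ a * 'X_l' ^+ b).
Proof.
move=> ne ne'; have [s [h1 h2]] := perm2 ne' ne.
by rewrite -[RHS](Av_msym s) msymM !rmorphXn /= !msymXi h1 h2.
Qed.

Lemma lin_solve (V : lmodType R) (N : R) (D0 E X Y : V) :
  N != 0 -> N != 1 -> D0 = Y - E -> (N * N) *: D0 + N *: E = (N * N) *: X ->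
  E = (N / (N - 1)) *: (Y - X).
Proof.
move=> N0 N1 -> H.
have N1' : N - 1 != 0 by rewrite subr_eq0.
have H2 : (N * N - N) *: E = (N * N) *: (Y - X).
  rewrite scalerBr -H scalerBr scalerBl.
  set u := (N * N) *: Y; set v := (N * N) *: E; set w := N *: E.
  by rewrite opprD opprB addrA [u + _]addrC subrK.
have NN : N * N - N != 0 by rewrite (_ : N * N - N = N * (N - 1)); [rewrite mulf_neq0 | ring].
have -> : E = (N * N - N)^-1 *: ((N * N - N) *: E) by rewrite scalerA mulVf ?scale1r.
rewrite H2 scalerA; congr (_ *: _).
rewrite (_ : N * N - N = N * (N - 1)); last by ring.
by field; rewrite N1' N0.
Qed.

Definition cN : R := (n%:R : R) / ((n%:R : R) - 1).

Lemma sum_delta (V : lmodType R) (k : 'I_n) (E : V) :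
  \sum_(l < n) ((k == l)%:R : R) *: E = E.
Proof.
rewrite (bigD1 k) //= eqxx scale1r big1 ?addr0 // => l lk.
by rewrite eq_sym (negbTE lk) scale0r.
Qed.

Lemma Av_quad a b (V W : 'I_n -> R) : (1 < n)%N ->
  \sum_k V k = 0 -> \sum_k W k = 0 ->
  Av (\sum_k \sum_l (V k * W l) *: ('X_k ^+ a * 'X_l ^+ b)) =
  (\sum_k V k * W k) *: (cN *: (ps (a + b) - ps a * ps b)).
Proof.
move=> n1 sV sW.
have n0 : (0 < n)%N by apply: ltnW.
pose i0 := Ordinal n0; pose i1 := Ordinal n1.
pose D0 := Av ('X_i0 ^+ a * 'X_i1 ^+ b); pose E := ps (a + b) - D0.
have HD : forall k l, Av ('X_k ^+ a * 'X_l ^+ b) = D0 + ((k == l)%:R : R) *: E.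
  move=> k l; case: eqVneq => [<-|kl].
    by rewrite scale1r -exprD Av_Xk /E addrC subrK.
  by rewrite scale0r addr0 /D0; apply: Av_pair.
have HE : E = cN *: (ps (a + b) - ps a * ps b).
  apply: (@lin_solve _ (n%:R) D0 E (ps a * ps b) (ps (a + b))).
  - by rewrite pnatr_eq0 -lt0n.
  - by rewrite pnatr_eq1; apply/eqP => E1; have := n1; rewrite E1.
  - by rewrite /E opprB addrC subrK.
  transitivity (\sum_(k < n) \sum_(l < n) Av ('X_k ^+ a * 'X_l ^+ b)).
    rewrite (eq_bigr (fun k => (n%:R : R) *: D0 + E)); last first.
      move=> k _; rewrite (eq_bigr (fun l => D0 + ((k == l)%:R : R) *: E)); last by move=> l _; rewrite HD.
      by rewrite big_split /= sum_delta sumr_const card_ord scaler_nat.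
    by rewrite big_split /= !sumr_const card_ord -!scaler_nat [in RHS]scalerA.
  transitivity (\sum_(k < n) Av (\sum_(l < n) 'X_k ^+ a * 'X_l ^+ b)).
    by apply: eq_bigr => k _; rewrite Av_sum.
  rewrite -Av_sum.
  rewrite (eq_bigr (fun k => 'X_k ^+ a * \sum_(l < n) 'X_l ^+ b)); last by move=> k _; rewrite mulr_sumr.
  rewrite -mulr_suml !sumX_psum // -scalerAl -scalerAr scalerA Av_sym //.
  by apply: rpredZ; apply: rpredM; apply: psum_sym.
rewrite Av_sum (eq_bigr (fun k => \sum_l (V k * W l) *: (D0 + ((k == l)%:R : R) *: E))); last first.
  by move=> k _; rewrite Av_sum; apply: eq_bigr => l _; rewrite AvZ HD.
rewrite -HE.
have H1 : forall k, \sum_l (V k * W l) *: (D0 + ((k == l)%:R : R) *: E) =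
    (V k * \sum_l W l) *: D0 + (V k * W k) *: E.
  move=> k; rewrite (eq_bigr (fun l => (V k * W l) *: D0 + (V k * W l) *: (((k == l)%:R : R) *: E))); last by move=> l _; rewrite scalerDr.
  rewrite big_split /= -scaler_suml -mulr_sumr; congr (_ + _).
  rewrite (bigD1 k) //= eqxx scale1r big1 ?addr0 // => l lk.
  by rewrite eq_sym (negbTE lk) scale0r scaler0.
rewrite (eq_bigr _ (fun k _ => H1 k)).
rewrite (eq_bigr (fun k => (V k * W k) *: E)); last by move=> k _; rewrite sW mulr0 scale0r add0r.
by rewrite -scaler_suml.
Qed.

End Av.

Section Mx.
Variables (R : realType) (n : nat).
Local Notation P := {mpoly R[n]}.

Lemma mxinnerE m (Q : 'M[R]_m) (M : 'M[P]_m) :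
  mxinner Q M = \sum_i \sum_j (Q i j) *: M j i.
Proof.
rewrite /mxinner /mxtrace; apply: eq_bigr => i _; rewrite mxE.
by apply: eq_bigr => j _; rewrite mxE mul_mpolyC.
Qed.

Lemma mxinnerD m (Q1 Q2 : 'M[R]_m) (M : 'M[P]_m) :
  mxinner (Q1 + Q2) M = mxinner Q1 M + mxinner Q2 M.
Proof.
rewrite !mxinnerE -big_split; apply: eq_bigr => i _; rewrite -big_split.
by apply: eq_bigr => j _; rewrite mxE scalerDl.
Qed.

Lemma mxinner0 m (M : 'M[P]_m) : mxinner 0 M = 0.
Proof.
rewrite mxinnerE big1 // => i _; rewrite big1 // => j _; by rewrite mxE scale0r.
Qed.

Lemma psd0 m : psd (0 : 'M[R]_m).
Proof. by apply: psd_of; [rewrite trmx0 | move=> u; rewrite /bf big1 // => i _; rewrite big1 // => j _; rewrite mxE mulr0 mul0r]. Qed.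

Lemma psdD m (Q1 Q2 : 'M[R]_m) : psd Q1 -> psd Q2 -> psd (Q1 + Q2).
Proof.
move=> p1 p2; apply: psd_of; first by rewrite linearD /= (proj1 p1) (proj1 p2).
move=> u; have -> : bf (Q1 + Q2) u u = bf Q1 u u + bf Q2 u u.
  rewrite /bf -big_split; apply: eq_bigr => i _; rewrite -big_split.
  by apply: eq_bigr => j _; rewrite mxE mulrDr mulrDl.
by apply: addr_ge0; apply: psdP.
Qed.

Lemma psd_gram m (K : finType) (c : R) (W : 'I_m -> K -> R) : 0 <= c ->
  psd (\matrix_(i, j) (c * \sum_k W i k * W j k)).
Proof.
move=> c0; apply: psd_of.
  by apply/matrixP => i j; rewrite !mxE; congr (_ * _); apply: eq_bigr => k _; rewrite mulrC.
move=> u; have -> : bf (\matrix_(i, j) (c * \sum_k W i k * W j k)) u u =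
    c * \sum_k (\sum_i u i * W i k) ^+ 2.
  rewrite /bf mulr_sumr (eq_bigr (fun k => \sum_i \sum_j c * (u i * W i k * (u j * W j k)))); last first.
    move=> k _; rewrite expr2 mulr_suml mulr_sumr; apply: eq_bigr => i _.
    by rewrite mulr_sumr mulr_sumr.
  rewrite [RHS]exchange_big; apply: eq_bigr => i _; rewrite [RHS]exchange_big; apply: eq_bigr => j _.
  rewrite mxE mulr_sumr mulr_sumr mulr_suml; apply: eq_bigr => k _; ring.
by apply: mulr_ge0 => //; apply: sumr_ge0 => k _; apply: sqr_ge0.
Qed.

Lemma mxinner_enum (I : finType) (G : I -> I -> R) (F : I -> I -> P) :
  mxinner (\matrix_(i, j) G (enum_val i) (enum_val j) : 'M_#|{: I}|)
          (\matrix_(i, j) F (enum_val i) (enum_val j)) =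
  \sum_x \sum_y G x y *: F y x.
Proof.
rewrite mxinnerE.
rewrite (eq_bigr (fun i : 'I_#|{: I}| => \sum_y G (enum_val i) y *: F y (enum_val i))).
  rewrite -(@big_enum_val _ _ _ I {: I} (fun x => \sum_y G x y *: F y x)).
  by apply: eq_bigl => x; rewrite inE.
move=> i _.
transitivity (\sum_(y in {: I}) G (enum_val i) y *: F y (enum_val i)); last first.
  by apply: eq_bigl => y; rewrite inE.
apply: esym; etransitivity; first exact: (@big_enum_val _ _ _ I {: I} (fun y => G (enum_val i) y *: F y (enum_val i))).
by apply: eq_bigr => j _; rewrite !mxE.
Qed.

Lemma psd_rank1 m (w : 'I_m -> R) : psd (\matrix_(i, j) (w i * w j)).
Proof.
have -> : \matrix_(i, j) (w i * w j) = \matrix_(i, j) (1 * \sum_(k < 1) (fun i (_ : 'I_1) => w i) i k * (fun i (_ : 'I_1) => w i) j k).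
  by apply/matrixP => i j; rewrite !mxE big_ord1 mul1r.
exact: psd_gram.
Qed.
End Mx.

Section Main.
Variables (R : realType) (n d : nat).
Local Notation P := {mpoly R[n]}.
Local Notation ps := (psum R n).
Local Notation pm := (pmu R n).
Implicit Types (p q h f : P).

Lemma mxinnerA (G : partT d -> partT d -> R) :
  mxinner (\matrix_(i, j) G (enum_val i) (enum_val j) : 'M_(npart d)) (matA R n d) =
  \sum_x \sum_y G x y *: (pm y * pm x).
Proof. exact: (mxinner_enum G (fun x y => pm x * pm y)). Qed.

Lemma mxinnerA2 (G : partT d -> partT d -> R) (Q : 'M_(npart d)) :
  (forall i j, Q i j = G (enum_val i) (enum_val j)) ->
  mxinner Q (matA R n d) = \sum_x \sum_y G x y *: (pm y * pm x).
Proof.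
move=> HQ; have -> : Q = \matrix_(i, j) G (enum_val i) (enum_val j).
  by apply/matrixP => i j; rewrite mxE.
exact: mxinnerA.
Qed.

Definition Bf (x y : BIdx d) : P :=
  pm (tagged x) * pm (tagged y) *
    (ps ((tag x).+1 + (tag y).+1) - ps (tag x).+1 * ps (tag y).+1).

Lemma mxinnerB (G : BIdx d -> BIdx d -> R) :
  mxinner (\matrix_(i, j) G (enum_val i) (enum_val j) : 'M_(Nsize d)) (matB R n d) =
  \sum_x \sum_y G x y *: Bf y x.
Proof. exact: (mxinner_enum G Bf). Qed.

Lemma mxinnerB2 (G : BIdx d -> BIdx d -> R) (Q : 'M_(Nsize d)) :
  (forall i j, Q i j = G (enum_val i) (enum_val j)) ->
  mxinner Q (matB R n d) = \sum_x \sum_y G x y *: Bf y x.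
Proof.
move=> HQ; have -> : Q = \matrix_(i, j) G (enum_val i) (enum_val j).
  by apply/matrixP => i j; rewrite mxE.
exact: mxinnerB.
Qed.


Definition Wx (V : BIdx d -> 'I_n -> R) : P :=
  \sum_x pm (tagged x) * \sum_k V x k *: 'X_k ^+ (tag x).+1.
Definition Pa (al : partT d -> R) : P := \sum_la al la *: pm la.

Definition good (q : P) := exists (al : partT d -> R) (V : BIdx d -> 'I_n -> R),
  (forall x, \sum_k V x k = 0) /\ q = Pa al + Wx V.

Lemma Wx_D V1 V2 : Wx (fun x k => V1 x k + V2 x k) = Wx V1 + Wx V2.
Proof.
rewrite /Wx -big_split; apply: eq_bigr => x _ /=; rewrite -mulrDr -big_split /=.
by congr (_ * _); apply: eq_bigr => k _; rewrite scalerDl.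
Qed.

Lemma Wx_Z c V : Wx (fun x k => c * V x k) = c *: Wx V.
Proof.
rewrite /Wx scaler_sumr; apply: eq_bigr => x _; rewrite scalerAr scaler_sumr.
by congr (_ * _); apply: eq_bigr => k _; rewrite scalerA.
Qed.

Lemma Pa_D a1 a2 : Pa (fun la => a1 la + a2 la) = Pa a1 + Pa a2.
Proof. by rewrite /Pa -big_split; apply: eq_bigr => la _ /=; rewrite scalerDl. Qed.

Lemma Pa_Z c a : Pa (fun la => c * a la) = c *: Pa a.
Proof. by rewrite /Pa scaler_sumr; apply: eq_bigr => la _; rewrite scalerA. Qed.

Lemma Pa0 : Pa (fun _ => 0) = 0.
Proof. by rewrite /Pa big1 // => la _; rewrite scale0r. Qed.

Lemma Wx0 : Wx (fun _ _ => 0) = 0.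
Proof. by rewrite /Wx big1 // => x _; rewrite big1 ?mulr0 // => k _; rewrite scale0r. Qed.

Lemma good0 : good 0.
Proof.
exists (fun _ => 0), (fun _ _ => 0); split; first by move=> x; rewrite big1.
by rewrite Pa0 Wx0 addr0.
Qed.

Lemma goodD p q : good p -> good q -> good (p + q).
Proof.
move=> [a1 [V1 [H1 ->]]] [a2 [V2 [H2 ->]]].
exists (fun la => a1 la + a2 la), (fun x k => V1 x k + V2 x k); split.
  by move=> x; rewrite big_split /= H1 H2 addr0.
by rewrite Pa_D Wx_D addrACA.
Qed.

Lemma goodZ c q : good q -> good (c *: q).
Proof.
move=> [a [V [H ->]]]; exists (fun la => c * a la), (fun x k => c * V x k); split.
  by move=> x; rewrite -mulr_sumr H mulr0.
by rewrite Pa_Z Wx_Z scalerDr.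
Qed.

Lemma Pa_sym al : Pa al \is symmetric.
Proof. by apply: rpred_sum => la _; apply: rpredZ; apply: pmu_sym. Qed.

Lemma good_sym h : symform d h -> good h.
Proof.
move=> [hh hs]; have [c ->] := sym_SP hs hh.
exists c, (fun _ _ => 0); split; first by move=> x; rewrite big1.
by rewrite Wx0 addr0.
Qed.

Lemma sum_deltaR (t : 'I_n) : \sum_k ((k == t)%:R : R) = 1.
Proof.
rewrite (bigD1 t) //= eqxx big1 ?addr0 // => k kt; by rewrite (negbTE kt).
Qed.

Lemma sum_deltaX (t : 'I_n) (F : 'I_n -> P) : \sum_k ((k == t)%:R : R) *: F k = F t.
Proof.
rewrite (bigD1 t) //= eqxx scale1r big1 ?addr0 // => k kt; by rewrite (negbTE kt) scale0r.
Qed.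

Lemma good_gen p : T_gen d p -> good p.
Proof.
case=> [[s [h [hs ->]]]|[s [a [i [j [g [ha hi hj hg ->]]]]]]].
  by have /issymP -> := proj2 hs; apply: good_sym.
have /issymP gs := proj2 hg.
rewrite msymM msymB !rmorphXn /= !msymXi gs.
have [a' Ea] : exists a' : 'I_d, a = a'.+1.
  case/andP: ha => a1 ad; have a'd : (a.-1 < d)%N by rewrite prednK.
  by exists (Ordinal a'd); rewrite /= prednK.
subst a; have [be ->] := sym_SP (proj2 hg) (proj1 hg).
pose T := Tagged (fun b : 'I_d => partT (d - b.+1)).
pose c (x : BIdx d) := \sum_mu (if x == T a' mu then be mu else 0).
exists (fun _ => 0), (fun x k => c x * (((k == s i)%:R : R) - ((k == s j)%:R : R))); split.
  by move=> x; rewrite -mulr_sumr sumrB !sum_deltaR subrr mulr0.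
rewrite Pa0 add0r /Wx.
pose G (x : BIdx d) := pm (tagged x) * ('X_(s i) ^+ (tag x).+1 - 'X_(s j) ^+ (tag x).+1).
rewrite (eq_bigr (fun x => c x *: G x)); last first.
  move=> x _; rewrite /G scalerAr; congr (_ * _).
  rewrite (eq_bigr (fun k => c x *: (((k == s i)%:R : R) *: 'X_k ^+ (tag x).+1 -
       ((k == s j)%:R : R) *: 'X_k ^+ (tag x).+1))); last first.
    by move=> k _; rewrite -scalerA scalerBl.
  by rewrite -scaler_sumr sumrB !sum_deltaX.
rewrite /c (eq_bigr (fun x => \sum_mu (if x == T a' mu then be mu else 0) *: G x)); last first.
  by move=> x _; rewrite scaler_suml.
rewrite exchange_big /= mulr_sumr; apply: eq_bigr => mu _.
rewrite (bigD1 (T a' mu)) //= eqxx big1 ?addr0; last first.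
  by move=> x /negbTE ->; rewrite scale0r.
by rewrite /G /= -scalerAr mulrC.
Qed.


Lemma good_inT q : inT d q -> good q.
Proof.
move=> [s [H ->]]; rewrite big_seq; apply: big_ind => //.
- exact: good0.
- exact: goodD.
move=> x xs; apply: goodZ; apply: good_gen; exact: H.
Qed.

Lemma scaleMM (a b : R) (p q : P) : (a *: p) * (b *: q) = (a * b) *: (p * q).
Proof. by rewrite -scalerAl -scalerAr scalerA. Qed.

Lemma Av_Wx V : (forall x, \sum_k V x k = 0) -> Av (Wx V) = 0.
Proof.
move=> HV; rewrite /Wx Av_sum big1 // => x _; rewrite Av_symM ?pmu_sym //.
rewrite Av_sum (eq_bigr (fun k => V x k *: ps (tag x).+1)); last by move=> k _; rewrite AvZ Av_Xk.
by rewrite -scaler_suml HV scale0r mulr0.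
Qed.

Lemma cN_ge0 : 0 <= cN R n.
Proof.
rewrite /cN; have [->|n0] := posnP n; first by rewrite mul0r.
by apply: divr_ge0 => //; rewrite subr_ge0 ler1n.
Qed.

Lemma Av_good q : ((0 < d)%N -> (1 < n)%N) -> good q ->
  exists (Q1 : 'M[R]_(npart d)) (Q2 : 'M[R]_(Nsize d)),
    [/\ psd Q1, psd Q2 & Av (q ^+ 2) = mxinner Q1 (matA R n d) + mxinner Q2 (matB R n d)].
Proof.
move=> Hn [al [V [HV ->]]].
exists (\matrix_(i, j) (al (enum_val i) * al (enum_val j))).
exists (\matrix_(i, j) (cN R n * \sum_k V (enum_val i) k * V (enum_val j) k)).
split; [exact: psd_rank1 | exact: psd_gram cN_ge0 |].
rewrite (mxinnerA2 (G := fun x y => al x * al y)); last by move=> i j; rewrite mxE.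
rewrite (mxinnerB2 (G := fun x y => cN R n * \sum_k V x k * V y k)); last by move=> i j; rewrite mxE.
rewrite expr2 mulrDl !mulrDr !AvD Av_sym; last by apply: rpredM; apply: Pa_sym.
rewrite [Wx V * Pa al]mulrC Av_symM ?Pa_sym // Av_Wx // mulr0 ?addr0 ?add0r.
congr (_ + _).
  rewrite /Pa mulr_suml; apply: eq_bigr => la _; rewrite mulr_sumr; apply: eq_bigr => la' _.
  by rewrite scaleMM [pm la * _]mulrC.
rewrite /Wx big_distrl /= Av_sum; apply: eq_bigr => x _.
rewrite big_distrr /= Av_sum; apply: eq_bigr => y _.
have n1 : (1 < n)%N by apply: Hn; apply: (leq_ltn_trans (leq0n (tag x))).
rewrite mulrACA Av_symM; last by apply: rpredM; apply: pmu_sym.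
rewrite mulr_suml (eq_bigr (fun k => \sum_l (V x k * V y l) *: ('X_k ^+ (tag x).+1 * 'X_l ^+ (tag y).+1))); last first.
  by move=> k _; rewrite mulr_sumr; apply: eq_bigr => l _; rewrite scaleMM.
rewrite Av_quad //.
rewrite /Bf scalerA -scalerAr [cN R n * _]mulrC [(pm (tagged y) * pm (tagged x))]mulrC addnC.
by rewrite [ps (tag y).+1 * _]mulrC.
Qed.

Lemma Av_sos qs : ((0 < d)%N -> (1 < n)%N) -> (forall q, q \in qs -> inT d q) ->
  exists (Q1 : 'M[R]_(npart d)) (Q2 : 'M[R]_(Nsize d)),
    [/\ psd Q1, psd Q2 & Av (\sum_(q <- qs) q ^+ 2) = mxinner Q1 (matA R n d) + mxinner Q2 (matB R n d)].
Proof.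
move=> Hn; elim: qs => [|q qs IH] H.
  exists 0, 0; split; try exact: psd0.
  by rewrite big_nil Av0 !mxinner0 addr0.
have [Q1 [Q2 [p1 p2 E]]] : _ := IH (fun r rq => H r (@mem_behead _ (q :: qs) r rq)).
have [Q1' [Q2' [p1' p2' E']]] := Av_good Hn (good_inT (H q (mem_head _ _))).
exists (Q1' + Q1), (Q2' + Q2); split; try exact: psdD.
by rewrite big_cons AvD E E' !mxinnerD addrACA.
Qed.

Lemma only_if f : ((0 < d)%N -> (1 < n)%N) -> symform (2 * d) f -> sos_T d f ->
  exists (Q1 : 'M[R]_(npart d)) (Q2 : 'M[R]_(Nsize d)),
    [/\ psd Q1, psd Q2 & f = mxinner Q1 (matA R n d) + mxinner Q2 (matB R n d)].
Proof.
move=> Hn [_ fs] [qs [H Ef]].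
have [Q1 [Q2 [p1 p2 E]]] := Av_sos Hn H.
by exists Q1, Q2; split => //; rewrite -E -Ef Av_sym.
Qed.

Lemma inT0 : inT d (0 : P).
Proof. by exists [::]; split => //; rewrite big_nil. Qed.

Lemma inTD p q : inT d p -> inT d q -> inT d (p + q).
Proof.
move=> [s1 [H1 ->]] [s2 [H2 ->]]; exists (s1 ++ s2); split; last by rewrite big_cat.
by move=> x; rewrite mem_cat => /orP[/H1|/H2].
Qed.

Lemma inTZ c q : inT d q -> inT d (c *: q).
Proof.
move=> [s0 [H ->]]; exists (map (fun x => (c * x.1, x.2)) s0); split.
  by move=> x /mapP[y /H Hy ->].
by rewrite big_map scaler_sumr; apply: eq_bigr => x _; rewrite scalerA.
Qed.

Lemma inT_gen p : T_gen d p -> inT d p.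
Proof.
move=> H; exists [:: (1, p)]; split; first by move=> x; rewrite inE => /eqP ->.
by rewrite big_seq1 scale1r.
Qed.

Lemma inT_sum (I : Type) (r : seq I) (Q : pred I) (F : I -> P) :
  (forall i, Q i -> inT d (F i)) -> inT d (\sum_(i <- r | Q i) F i).
Proof. by move=> H; apply: big_ind => //; [apply: inT0 | apply: inTD]. Qed.

Lemma sos0 : sos_T d (0 : P).
Proof. by exists [::]; split => //; rewrite big_nil. Qed.

Lemma sosD p q : sos_T d p -> sos_T d q -> sos_T d (p + q).
Proof.
move=> [s1 [H1 ->]] [s2 [H2 ->]]; exists (s1 ++ s2); split; last by rewrite big_cat.
by move=> x; rewrite mem_cat => /orP[/H1|/H2].
Qed.

Lemma sos_sq q : inT d q -> sos_T d (q ^+ 2).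
Proof. by move=> H; exists [:: q]; split; [move=> x; rewrite inE => /eqP -> | rewrite big_seq1]. Qed.

Lemma sos_sum (I : Type) (r : seq I) (Q : pred I) (F : I -> P) :
  (forall i, Q i -> sos_T d (F i)) -> sos_T d (\sum_(i <- r | Q i) F i).
Proof. by move=> H; apply: big_ind => //; [apply: sos0 | apply: sosD]. Qed.

Lemma mxinner_decomp m (Q : 'M[R]_m) (M : 'M[P]_m) (l : seq ('I_m -> R)) :
  (forall i j, Q i j = \sum_(v <- l) v i * v j) ->
  mxinner Q M = \sum_(v <- l) \sum_i \sum_j (v i * v j) *: M j i.
Proof.
move=> HQ; rewrite mxinnerE [RHS]exchange_big /=; apply: eq_bigr => i _.
rewrite [RHS]exchange_big /=; apply: eq_bigr => j _.
by rewrite HQ scaler_suml.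
Qed.

Lemma sq_sum m (v : 'I_m -> R) (F : 'I_m -> P) :
  (\sum_i v i *: F i) ^+ 2 = \sum_i \sum_j (v i * v j) *: (F j * F i).
Proof.
rewrite expr2 big_distrl /=; apply: eq_bigr => i _.
rewrite big_distrr /=; apply: eq_bigr => j _.
by rewrite scaleMM mulrC [F i * _]mulrC.
Qed.

Lemma symform_pmu k (mu : partT k) : symform k (pm mu).
Proof. by split; [apply: pmu_homog | apply: pmu_sym]. Qed.

Lemma sos_A (Q : 'M[R]_(npart d)) : psd Q -> sos_T d (mxinner Q (matA R n d)).
Proof.
move=> pQ; have [l Hl] := psd_decomp pQ.
rewrite (mxinner_decomp _ Hl); apply: sos_sum => v _.
rewrite (eq_bigr (fun i => \sum_j (v i * v j) *: (pm (enum_val j) * pm (enum_val i)))); last first.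
  by move=> i _; apply: eq_bigr => j _; rewrite mxE.
rewrite -sq_sum; apply: sos_sq; apply: inT_sum => i _; apply: inTZ.
apply: inT_gen; left; exists 1%g, (pm (enum_val i)); split; first exact: symform_pmu.
by rewrite msym1m.
Qed.

Lemma pair_sum (x y : 'I_n -> P) :
  \sum_k \sum_l (x k - x l) * (y k - y l) =
  (2 * n)%:R * \sum_k x k * y k - 2%:R * ((\sum_k x k) * (\sum_k y k)).
Proof.
have e : forall k l, (x k - x l) * (y k - y l) =
  (x k * y k + x l * y l) - (x k * y l + x l * y k) by move=> k l; ring.
rewrite (eq_bigr (fun k => \sum_l (x k * y k + x l * y l) - \sum_l (x k * y l + x l * y k))); last first.
  by move=> k _; rewrite -sumrB; apply: eq_bigr => l _; rewrite e.
rewrite sumrB; congr (_ - _).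
  rewrite (eq_bigr (fun k => (x k * y k) *+ n + \sum_l x l * y l)); last first.
    by move=> k _; rewrite big_split /= sumr_const card_ord.
  rewrite big_split /= sumr_const card_ord sumrMnl.
  by rewrite -mulrnDr mulr_natl addnn -mul2n.
rewrite (eq_bigr (fun k => x k * \sum_l y l + (\sum_l x l) * y k)); last first.
  by move=> k _; rewrite big_split /= -big_distrr -big_distrl.
rewrite big_split /= -big_distrl -big_distrr /= [(\sum_l x l) * _]mulrC.
by rewrite mulr_natl mulr2n.
Qed.

Lemma natP k (z : P) : (k%:R : P) * z = (k%:R : R) *: z.
Proof. by rewrite mulr_natl scaler_nat. Qed.

Lemma pair_ps a b : (0 < n)%N ->
  \sum_k \sum_l ('X_k ^+ a - 'X_l ^+ a) * ('X_k ^+ b - 'X_l ^+ b) =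
  ((2 * n * n)%:R : R) *: (ps (a + b) - ps a * ps b) :> P.
Proof.
move=> n0; rewrite (pair_sum (fun k => 'X_k ^+ a) (fun k => 'X_k ^+ b)).
rewrite (eq_bigr (fun k => 'X_k ^+ (a + b))); last by move=> k _; rewrite exprD.
rewrite !sumX_psum // scaleMM !natP scalerA scalerBr scalerA !natrM.
by congr (_ - _); congr (_ *: _); ring.
Qed.

Lemma BIdx_n (x : BIdx d) : (2 * d <= n)%N -> (1 < n)%N.
Proof.
move=> dn; have d0 : (0 < d)%N by apply: (leq_ltn_trans (leq0n (tag x))).
by move: d0 dn; clear; lia.
Qed.

Lemma inT_q (e : BIdx d) (k l : 'I_n) : (2 * d <= n)%N ->
  inT d (('X_k ^+ (tag e).+1 - 'X_l ^+ (tag e).+1) * pm (tagged e)).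
Proof.
move=> dn; have n1 := BIdx_n e dn; have n0 : (0 < n)%N by apply: ltnW.
case: (eqVneq k l) => [->|kl]; first by rewrite subrr mul0r; apply: inT0.
pose i0 := Ordinal n0; pose i1 := Ordinal n1.
have [s [h0 h1]] := @perm2 n i0 i1 k l isT kl.
apply: inT_gen; right; exists s, (tag e).+1, i0, i1, (pm (tagged e)); split => //.
- by rewrite /= ltn_ord.
- exact: symform_pmu.
by rewrite msymM msymB !rmorphXn /= !msymXi h0 h1; have /issymP -> := pmu_sym R n (tagged e).
Qed.

Lemma sos_B (Q : 'M[R]_(Nsize d)) : (2 * d <= n)%N -> psd Q -> sos_T d (mxinner Q (matB R n d)).
Proof.
move=> dn pQ; have [l Hl] := psd_decomp pQ.
rewrite (mxinner_decomp _ Hl); apply: sos_sum => v _.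
have [n0|n0] := posnP n.
  rewrite big1; first exact: sos0.
  move=> i _; have := BIdx_n (enum_val i) dn; by rewrite n0.
pose e (i : 'I_(Nsize d)) := (tag (enum_val i : BIdx d)).+1.
pose F (k l : 'I_n) (i : 'I_(Nsize d)) : P := ('X_k ^+ e i - 'X_l ^+ e i) * pm (tagged (enum_val i : BIdx d)).
pose q (k l : 'I_n) := \sum_i v i *: F k l i.
pose c : R := Num.sqrt ((2 * n * n)%:R^-1).
have cc : c * c * (2 * n * n)%:R = 1.
  rewrite -expr2 sqr_sqrtr ?invr_ge0 // mulVf // pnatr_eq0 !muln_eq0 /=.
  by rewrite orbb -lt0n n0.
suff -> : \sum_i \sum_j (v i * v j) *: matB R n d j i = \sum_k \sum_l (c *: q k l) ^+ 2.
  apply: sos_sum => k _; apply: sos_sum => l0 _; apply: sos_sq; apply: inTZ.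
  by apply: inT_sum => i _; apply: inTZ; apply: inT_q.
symmetry.
transitivity (\sum_k \sum_l \sum_i \sum_j (c ^+ 2 * (v i * v j)) *: (F k l j * F k l i)).
  apply: eq_bigr => k _; apply: eq_bigr => l0 _.
  rewrite /q exprZn sq_sum scaler_sumr; apply: eq_bigr => i _.
  by rewrite scaler_sumr; apply: eq_bigr => j _; rewrite scalerA.
under eq_bigr => k _ do rewrite exchange_big.
under eq_bigr => k _ do under eq_bigr => i _ do rewrite exchange_big.
rewrite exchange_big; under eq_bigr => i _ do rewrite exchange_big.
apply: eq_bigr => i _; apply: eq_bigr => j _.
transitivity ((c ^+ 2 * (v i * v j)) *: \sum_k \sum_l F k l j * F k l i).
  by rewrite scaler_sumr; apply: eq_bigr => k _; rewrite scaler_sumr.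
have HF : forall k l0, F k l0 j * F k l0 i = (('X_k ^+ e j - 'X_l0 ^+ e j) * ('X_k ^+ e i - 'X_l0 ^+ e i)) *
   (pm (tagged (enum_val j : BIdx d)) * pm (tagged (enum_val i : BIdx d))).
  by move=> k l0; rewrite /F mulrACA.
under eq_bigr => k _ do rewrite (eq_bigr _ (fun l0 _ => HF k l0)) -big_distrl.
rewrite -big_distrl pair_ps // mxE /= -scalerAl scalerA.
rewrite [(ps _ - _) * _]mulrC /e; congr (_ *: _).
by rewrite expr2 mulrAC cc mul1r.
Qed.

End Main.

Theorem lemma5p1 (R : realType) (n d : nat) (f : {mpoly R[n]}) :
  (2 * d <= n)%N ->
  symform (2 * d) f ->
  sos_T d f <->
  exists (Q1 : 'M[R]_(npart d)) (Q2 : 'M[R]_(Nsize d)),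
    [/\ psd Q1, psd Q2 & f = mxinner Q1 (matA R n d) + mxinner Q2 (matB R n d)].
Proof.
move=> dn fs; split.
  apply: only_if => // d0; move: d0 dn; clear; lia.
move=> [Q1 [Q2 [p1 p2 ->]]]; apply: sosD; [exact: sos_A | exact: sos_B].
Qed.
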